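(* No free adequate semigroup or free adequate monoid on a non-empty set is finitely generated as a semigroup or monoid (i.e. using multiplication only).
   Context: For a semigroup $S$ let $S^1=S$ if $S$ is a monoid and otherwise $S$ with an identity adjoined. $a\,\mathcal{L}^*\,b$ iff for all $x,y\in S^1$: $ax=ay\Leftrightarrow bx=by$; $a\,\mathcal{R}^*\,b$ iff for all $x,y\in S^1$: $xa=ya\Leftrightarrow xb=yb$. $S$ is adequate if its idempotents commute and every $\mathcal{L}^*$-class and every $\mathcal{R}^*$-class contains an idempotent (necessarily unique); $x^+$ is the idempotent $\mathcal{R}^*$-related to $x$, $x^*$ the idempotent $\mathcal{L}^*$-related to $x$. Adequate semigroups [monoids] are viewed as $(2,1,1)$-algebras [$(2,1,1,0)$-algebras], morphisms preserving all operations. The free adequate semigroup [monoid] on a set $\Sigma$ is an adequate semigroup [monoid] containing $\Sigma$ such that every map from $\Sigma$ to an adequate semigroup [monoid] extends uniquely to a morphism. *)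

(* Defs.v *)
From Stdlib Require Import List.

Section RawDefs.
Variable S : Type.
Variable mul : S -> S -> S.

Definition is_idem (e : S) : Prop := mul e e = e.

(* S^1 is modelled as [option S], [None] being the adjoined identity.
   (If S is already a monoid, adjoining a fresh identity gives the same
   relations L*, R*, since a * 1 = a for the old identity too.) *)
Definition ract (a : S) (x : option S) : S :=
  match x with None => a | Some x => mul a x end.
Definition lact (x : option S) (a : S) : S :=
  match x with None => a | Some x => mul x a end.

Definition Lstar (a b : S) : Prop :=
  forall x y : option S, ract a x = ract a y <-> ract b x = ract b y.
Definition Rstar (a b : S) : Prop :=
  forall x y : option S, lact x a = lact y a <-> lact x b = lact y b.

Inductive sg_gen (A : S -> Prop) : S -> Prop :=
| sg_gen_base a : A a -> sg_gen A a
| sg_gen_mul x y : sg_gen A x -> sg_gen A y -> sg_gen A (mul x y).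

Definition fg_semigroup : Prop :=
  exists l : list S, forall s : S, sg_gen (fun x => In x l) s.

Variable one : S.

Inductive mon_gen (A : S -> Prop) : S -> Prop :=
| mon_gen_one : mon_gen A one
| mon_gen_base a : A a -> mon_gen A a
| mon_gen_mul x y : mon_gen A x -> mon_gen A y -> mon_gen A (mul x y).

Definition fg_monoid : Prop :=
  exists l : list S, forall s : S, mon_gen (fun x => In x l) s.

End RawDefs.

Record adequate_semigroup := {
  as_car :> Type;
  as_mul : as_car -> as_car -> as_car;
  as_plus : as_car -> as_car;
  as_star : as_car -> as_car;
  as_assoc : forall x y z, as_mul x (as_mul y z) = as_mul (as_mul x y) z;
  as_idem_comm : forall e f, is_idem as_car as_mul e -> is_idem as_car as_mul f ->
                   as_mul e f = as_mul f e;
  as_plus_idem : forall x, is_idem as_car as_mul (as_plus x);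
  as_plus_R : forall x, Rstar as_car as_mul x (as_plus x);
  as_star_idem : forall x, is_idem as_car as_mul (as_star x);
  as_star_L : forall x, Lstar as_car as_mul x (as_star x)
}.

Record adequate_monoid := {
  am_car :> Type;
  am_mul : am_car -> am_car -> am_car;
  am_one : am_car;
  am_plus : am_car -> am_car;
  am_star : am_car -> am_car;
  am_assoc : forall x y z, am_mul x (am_mul y z) = am_mul (am_mul x y) z;
  am_mul1 : forall x, am_mul x am_one = x;
  am_1mul : forall x, am_mul am_one x = x;
  am_idem_comm : forall e f, is_idem am_car am_mul e -> is_idem am_car am_mul f ->
                   am_mul e f = am_mul f e;
  am_plus_idem : forall x, is_idem am_car am_mul (am_plus x);
  am_plus_R : forall x, Rstar am_car am_mul x (am_plus x);
  am_star_idem : forall x, is_idem am_car am_mul (am_star x);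
  am_star_L : forall x, Lstar am_car am_mul x (am_star x)
}.

Definition as_morph (S T : adequate_semigroup) (f : S -> T) : Prop :=
  (forall x y, f (as_mul S x y) = as_mul T (f x) (f y)) /\
  (forall x, f (as_plus S x) = as_plus T (f x)) /\
  (forall x, f (as_star S x) = as_star T (f x)).

Definition am_morph (S T : adequate_monoid) (f : S -> T) : Prop :=
  (forall x y, f (am_mul S x y) = am_mul T (f x) (f y)) /\
  (forall x, f (am_plus S x) = am_plus T (f x)) /\
  (forall x, f (am_star S x) = am_star T (f x)) /\
  f (am_one S) = am_one T.

Definition is_free_adequate_semigroup (Sigma : Type) (S : adequate_semigroup)
  (i : Sigma -> S) : Prop :=
  (forall a b, i a = i b -> a = b) /\
  forall (T : adequate_semigroup) (g : Sigma -> T),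
    exists h : S -> T, as_morph S T h /\ (forall a, h (i a) = g a) /\
      forall h' : S -> T, as_morph S T h' -> (forall a, h' (i a) = g a) ->
        forall s, h' s = h s.

Definition is_free_adequate_monoid (Sigma : Type) (M : adequate_monoid)
  (i : Sigma -> M) : Prop :=
  (forall a b, i a = i b -> a = b) /\
  forall (T : adequate_monoid) (g : Sigma -> T),
    exists h : M -> T, am_morph M T h /\ (forall a, h (i a) = g a) /\
      forall h' : M -> T, am_morph M T h' -> (forall a, h' (i a) = g a) ->
        forall s, h' s = h s.

(* Main.v *)
Require Import Defs.
From Stdlib Require Import List Lia PeanoNat.

Definition Tmul (x y : nat * nat) : nat * nat :=
  (fst x + fst y, Nat.max (snd x - fst y) (snd y)).
Definition Tplus (x : nat * nat) : nat * nat := (0, snd x + fst x).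
Definition Tstar (x : nat * nat) : nat * nat := (0, snd x).

Lemma pair_eq (a b c d : nat) : (a, b) = (c, d) <-> a = c /\ b = d.
Proof. split; [intro H; inversion H; auto | intros [-> ->]; auto]. Qed.

Lemma T_assoc x y z : Tmul x (Tmul y z) = Tmul (Tmul x y) z.
Proof. destruct x as [a b], y as [c d], z as [e f]; unfold Tmul; cbn;
  rewrite pair_eq; split; lia. Qed.

Lemma T_comm e f : is_idem _ Tmul e -> is_idem _ Tmul f -> Tmul e f = Tmul f e.
Proof. destruct e as [a b], f as [c d]; unfold is_idem, Tmul; cbn;
  rewrite !pair_eq; intros [? ?] [? ?]; split; lia. Qed.

Lemma T_plus_idem x : is_idem _ Tmul (Tplus x).
Proof. destruct x as [a b]; unfold is_idem, Tmul, Tplus; cbn;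
  rewrite pair_eq; split; lia. Qed.

Lemma T_star_idem x : is_idem _ Tmul (Tstar x).
Proof. destruct x as [a b]; unfold is_idem, Tmul, Tstar; cbn;
  rewrite pair_eq; split; lia. Qed.

Lemma T_plus_R x : Rstar _ Tmul x (Tplus x).
Proof. destruct x as [d j]; intros [[d1 j1]|] [[d2 j2]|];
  unfold lact, Tmul, Tplus; cbn; rewrite !pair_eq;
  split; intros [? ?]; split; lia. Qed.

Lemma T_star_L x : Lstar _ Tmul x (Tstar x).
Proof. destruct x as [d j]; intros [[d1 j1]|] [[d2 j2]|];
  unfold ract, Tmul, Tstar; cbn; rewrite !pair_eq;
  split; intros [? ?]; split; lia. Qed.

Definition TS : adequate_semigroup :=
  {| as_car := nat * nat; as_mul := Tmul; as_plus := Tplus; as_star := Tstar;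
     as_assoc := T_assoc; as_idem_comm := T_comm; as_plus_idem := T_plus_idem;
     as_plus_R := T_plus_R; as_star_idem := T_star_idem; as_star_L := T_star_L |}.

Lemma T_mul1 x : Tmul x (0,0) = x.
Proof. destruct x as [a b]; unfold Tmul; cbn; rewrite pair_eq; split; lia. Qed.
Lemma T_1mul x : Tmul (0,0) x = x.
Proof. destruct x as [a b]; unfold Tmul; cbn; rewrite pair_eq; split; lia. Qed.

Definition TM : adequate_monoid :=
  {| am_car := nat * nat; am_mul := Tmul; am_one := (0,0); am_plus := Tplus; am_star := Tstar;
     am_assoc := T_assoc; am_mul1 := T_mul1; am_1mul := T_1mul;
     am_idem_comm := T_comm; am_plus_idem := T_plus_idem;
     am_plus_R := T_plus_R; am_star_idem := T_star_idem; am_star_L := T_star_L |}.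

Definition bnd {A} (h : A -> nat * nat) (l : list A) : nat :=
  fold_right (fun y acc => Nat.max (snd (h y)) acc) 0 l.

Lemma bnd_in {A} (h : A -> nat * nat) l y : In y l -> snd (h y) <= bnd h l.
Proof. induction l; cbn; [tauto|]. fold (bnd h l). intros [->|H]; [lia|]. specialize (IHl H); lia. Qed.

Lemma Tmul_snd x y B : snd x <= B -> snd y <= B -> snd (Tmul x y) <= B.
Proof. destruct x, y; unfold Tmul; cbn; lia. Qed.

Lemma sg_bound {A} (mul : A -> A -> A) (h : A -> nat * nat)
  (hm : forall x y, h (mul x y) = Tmul (h x) (h y)) l s :
  sg_gen A mul (fun x => In x l) s -> snd (h s) <= bnd h l.
Proof. induction 1. - now apply bnd_in. - rewrite hm; now apply Tmul_snd. Qed.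

Lemma mon_bound {A} (mul : A -> A -> A) one (h : A -> nat * nat)
  (hm : forall x y, h (mul x y) = Tmul (h x) (h y)) (h1 : h one = (0,0)) l s :
  mon_gen A mul one (fun x => In x l) s -> snd (h s) <= bnd h l.
Proof. induction 1. - rewrite h1; cbn; lia. - now apply bnd_in.
  - rewrite hm; now apply Tmul_snd. Qed.

Fixpoint pw {A} (mul : A -> A -> A) (x : A) (k : nat) : A :=
  match k with 0 => x | S k => mul (pw mul x k) x end.

Lemma pw_img {A} (mul : A -> A -> A) (h : A -> nat * nat)
  (hm : forall x y, h (mul x y) = Tmul (h x) (h y)) x (hx : h x = (1,0)) k :
  h (pw mul x k) = (S k, 0).
Proof. induction k; cbn; auto. rewrite hm, IHk, hx; unfold Tmul; cbn;
  rewrite pair_eq; split; lia. Qed.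

Theorem theorem7p3 :
  (forall (Sigma : Type) (S : adequate_semigroup) (i : Sigma -> S),
      inhabited Sigma -> is_free_adequate_semigroup Sigma S i ->
      ~ fg_semigroup S (as_mul S)) /\
  (forall (Sigma : Type) (M : adequate_monoid) (i : Sigma -> M),
      inhabited Sigma -> is_free_adequate_monoid Sigma M i ->
      ~ fg_semigroup M (am_mul M) /\ ~ fg_monoid M (am_mul M) (am_one M)).
Proof.
  split.
  - intros Sigma S i [s0] [_ Hf] [l Hl].
    destruct (Hf TS (fun _ => (1,0))) as [h [[hm [hp _]] [hi _]]].
    set (x := as_plus S (pw (as_mul S) (i s0) (bnd h l))).
    pose proof (sg_bound _ h hm l x (Hl x)) as Hb.
    unfold x in Hb; rewrite hp in Hb.
    rewrite (pw_img _ h hm (i s0) (hi s0)) in Hb. cbn in Hb; lia.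
  - intros Sigma M i [s0] [_ Hf].
    destruct (Hf TM (fun _ => (1,0))) as [h [[hm [hp [_ h1]]] [hi _]]].
    split; intros [l Hl];
    set (x := am_plus M (pw (am_mul M) (i s0) (bnd h l))).
    + pose proof (sg_bound _ h hm l x (Hl x)) as Hb.
      unfold x in Hb; rewrite hp in Hb.
      rewrite (pw_img _ h hm (i s0) (hi s0)) in Hb. cbn in Hb; lia.
    + pose proof (mon_bound _ _ h hm h1 l x (Hl x)) as Hb.
      unfold x in Hb; rewrite hp in Hb.
      rewrite (pw_img _ h hm (i s0) (hi s0)) in Hb. cbn in Hb; lia.
Qed.
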